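(* Let $V$ be a finite-dimensional super vector space over a field of characteristic $0$. For a Dirac structure $L\subseteq\mathcal{E}=\mathfrak{gl}(V)\oplus V$, let $W_L=\{x\in V:\ A+x\in L\text{ for some }A\in\mathfrak{gl}(V)\}$ and define $[x,y]_L=A(y)$ for $x,y\in W_L$, where $A$ is any element with $A+x\in L$. Then $[\cdot,\cdot]_L$ is well defined, takes values in $W_L$, and makes $W_L$ a Lie superalgebra; moreover the assignment $L\mapsto(W_L,[\cdot,\cdot]_L)$ is a bijection between the set of Dirac structures of the omni-Lie superalgebra $(\mathcal{E},[\![\cdot,\cdot]\!],\langle\cdot,\cdot\rangle)$ and the set of pairs $(W,[\cdot,\cdot]_W)$ with $W$ a graded subspace of $V$ and $[\cdot,\cdot]_W$ a Lie superalgebra structure on $W$. The inverse sends $(W,[\cdot,\cdot]_W)$ to $\{A+x:\ x\in W,\ A\in\mathfrak{gl}(V),\ A(y)=[x,y]_W\ \forall y\in W\}$.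
   Context: $\mathfrak{gl}(V)$: linear endomorphisms of $V$ with natural $\mathbb{Z}_2$-grading and supercommutator $[A,B]=AB-(-1)^{|A||B|}BA$. $\mathcal{E}=\mathfrak{gl}(V)\oplus V$ graded by $\mathcal{E}_\alpha=\mathfrak{gl}(V)_\alpha\oplus V_\alpha$, homogeneous elements $A+x$ with $|A|=|x|$. Bracket: $[\![A+x,B+y]\!]=[A,B]+\tfrac12(Ay-(-1)^{|x||y|}Bx)$; $V$-valued pairing: $\langle A+x,B+y\rangle=\tfrac12(Ay+(-1)^{|x||y|}Bx)$. $F^\perp=\{e:\langle e,f\rangle=0\ \forall f\in F\}$. A Dirac structure is a graded subspace $L\subseteq\mathcal{E}$ with $L=L^\perp$ and $[\![L,L]\!]\subseteq L$. A Lie superalgebra is a super vector space with bilinear bracket satisfying $[L_\alpha,L_\beta]\subseteq L_{\alpha+\beta}$, $[x,y]=-(-1)^{|x||y|}[y,x]$, and $[x,[y,z]]=[[x,y],z]+(-1)^{|x||y|}[y,[x,z]]$. *)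

(* Defs.v *)
From HB Require Import structures.
From mathcomp Require Import all_boot all_order all_algebra.
Set Implicit Arguments. Unset Strict Implicit. Unset Printing Implicit Defensive.
Import GRing.Theory.
Local Open Scope ring_scope.

(* A finite-dimensional super vector space V over F is modelled (up to
   isomorphism) as column vectors F^(p+q): the first p coordinates span V_0
   (even), the last q span V_1 (odd).  gl(V) = 'M_(p+q), acting by A *m y. *)
Section Omni.
Variables (F : fieldType) (p q : nat).
Local Notation n := (p + q)%N.
Local Notation Mat := 'M[F]_n.
Local Notation Vec := 'cV[F]_n.

Definition Elt := (Mat * Vec)%type.

Definition proj (b : bool) : Mat := if b then 1%:M - pid_mx p else pid_mx p.
Definition ssign (a b : bool) : F := if a && b then -1 else 1.
Definition vpart (b : bool) (x : Vec) : Vec := proj b *m x.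
Definition mpart (b : bool) (A : Mat) : Mat :=
  proj false *m A *m proj b + proj true *m A *m proj (~~ b).
Definition epart (b : bool) (e : Elt) : Elt := (mpart b e.1, vpart b e.2).

Definition scomm (A B : Mat) : Mat :=
  \sum_(a : bool) \sum_(b : bool)
     (mpart a A *m mpart b B - ssign a b *: (mpart b B *m mpart a A)).

(* omni-Lie superalgebra bracket and V-valued pairing, extended bilinearly *)
Definition obracket (e f : Elt) : Elt :=
  (scomm e.1 f.1,
   \sum_(a : bool) \sum_(b : bool)
     2^-1 *: (mpart a e.1 *m vpart b f.2 - ssign a b *: (mpart b f.1 *m vpart a e.2))).

Definition opairing (e f : Elt) : Vec :=
  \sum_(a : bool) \sum_(b : bool)
     2^-1 *: (mpart a e.1 *m vpart b f.2 + ssign a b *: (mpart b f.1 *m vpart a e.2)).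

Definition subspaceE (L : Elt -> Prop) : Prop :=
  L (0, 0) /\
  forall (c : F) (e f : Elt), L e -> L f -> L (c *: e.1 + f.1, c *: e.2 + f.2).
Definition gradedE (L : Elt -> Prop) : Prop :=
  subspaceE L /\ forall (b : bool) (e : Elt), L e -> L (epart b e).

Definition dirac (L : Elt -> Prop) : Prop :=
  gradedE L /\
  (forall e : Elt, L e <-> (forall f : Elt, L f -> opairing e f = 0)) /\
  (forall e f : Elt, L e -> L f -> L (obracket e f)).

Definition gradedV (W : Vec -> Prop) : Prop :=
  W 0 /\ (forall (c : F) (x y : Vec), W x -> W y -> W (c *: x + y)) /\
  (forall (b : bool) (x : Vec), W x -> W (vpart b x)).

Definition homog (b : bool) (x : Vec) : Prop := vpart b x = x.

(* Lie superalgebra structure on a graded subspace W (bracket given as a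
   total function, only its values on W matter) *)
Definition lie_super (W : Vec -> Prop) (br : Vec -> Vec -> Vec) : Prop :=
  (forall x y, W x -> W y -> W (br x y)) /\
  (forall (c : F) x y z, W x -> W y -> W z ->
     br (c *: x + y) z = c *: br x z + br y z /\
     br z (c *: x + y) = c *: br z x + br z y) /\
  (forall a b x y, W x -> W y -> homog a x -> homog b y ->
     homog (a (+) b) (br x y)) /\
  (forall a b x y, W x -> W y -> homog a x -> homog b y ->
     br x y = - (ssign a b *: br y x)) /\
  (forall a b c x y z, W x -> W y -> W z -> homog a x -> homog b y -> homog c z ->
     br x (br y z) = br (br x y) z + ssign a b *: br y (br x z)).

Definition WL (L : Elt -> Prop) (x : Vec) : Prop := exists A : Mat, L (A, x).

Definition diracOf (W : Vec -> Prop) (br : Vec -> Vec -> Vec) (e : Elt) : Prop :=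
  W e.2 /\ forall y : Vec, W y -> e.1 *m y = br e.2 y.

End Omni.

(* Main.v *)
Require Import Defs.
From HB Require Import structures.
From mathcomp Require Import all_boot all_order all_algebra.
From Stdlib Require Import Classical ClassicalEpsilon.
Import GRing.Theory.
Local Open Scope ring_scope.

Set Implicit Arguments. Unset Strict Implicit.

Section Basics.
Variables (F : fieldType) (p q : nat).
Local Notation n := (p + q)%N.
Local Notation Mat := 'M[F]_n.
Local Notation Vec := 'cV[F]_n.
Local Notation P := (proj F p q).
Local Arguments proj : simpl never.

Lemma P0idem : (pid_mx p : Mat) *m (pid_mx p : Mat) = pid_mx p.
Proof. by rewrite mul_pid_mx minnn; rewrite (minn_idPr (leq_addr q p)). Qed.

Lemma PP b c : P b *m P c = if b == c then P c else 0.
Proof.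
rewrite /proj /=; case: b; case: c => /=;
rewrite ?mulmxBl ?mulmxBr ?mul1mx ?mulmx1 ?P0idem ?subrr ?subr0 //.
Qed.

Lemma PPr b c k (M : 'M[F]_(n, k)) : P b *m (P c *m M) = if b == c then P c *m M else 0.
Proof. by rewrite mulmxA PP; case: (b == c); rewrite ?mul0mx. Qed.

Lemma Psum : P false + P true = 1.
Proof. by rewrite /proj addrC subrK. Qed.

Local Opaque proj.

Lemma vpart_vpart b c (x : Vec) : vpart b (vpart c x) = if b == c then vpart c x else 0.
Proof. by rewrite /vpart PPr. Qed.

Lemma vpart_sum (x : Vec) : vpart false x + vpart true x = x.
Proof. by rewrite /vpart -mulmxDl Psum mul1mx. Qed.

Lemma vpartD b c (x y : Vec) : vpart b (c *: x + y) = c *: vpart b x + vpart b y.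
Proof. by rewrite /vpart mulmxDr scalemxAr. Qed.

Lemma vpart0 b : vpart b (0 : Vec) = 0.
Proof. by rewrite /vpart mulmx0. Qed.

Lemma mpart_vpart a (A : Mat) b (y : Vec) :
  mpart a A *m vpart b y = vpart (a (+) b) (A *m vpart b y).
Proof.
rewrite /mpart /vpart mulmxDl -!mulmxA.
by case: a; case: b; rewrite !PPr /= ?mulmx0 ?addr0 ?add0r.
Qed.

Lemma mpart_mpart a c (A : Mat) : mpart a (mpart c A) = if a == c then mpart c A else 0.
Proof.
rewrite /mpart; move: (PPr) (PP); move: (proj F p q) => P' PPr' PP'.
rewrite !(mulmxDl, mulmxDr) -!mulmxA.
case: a; case: c => /=; rewrite !PPr' /= ?mulmx0 ?mul0mx ?addr0 ?add0r ?mulmxA ?PP' //=; rewrite -!mulmxA !PP' /= ?mulmx0 ?addr0 ?add0r //.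
Qed.

Lemma mpartD b c (A B : Mat) : mpart b (c *: A + B) = c *: mpart b A + mpart b B.
Proof.
rewrite /mpart; move: (proj F p q) => P'.
rewrite !(mulmxDl, mulmxDr) -!scalemxAr -!scalemxAl scalerDr.
by rewrite addrACA.
Qed.

Lemma mpart_sum (A : Mat) : mpart false A + mpart true A = A.
Proof.
rewrite /mpart /=; move: (Psum); move: (proj F p q) => P' Ps.
transitivity ((P' false + P' true) *m A *m (P' false + P' true)); last first.
  by rewrite Ps mul1mx mulmx1.
rewrite !(mulmxDl, mulmxDr) /= addrACA [RHS]addrACA; congr (_ + _); exact: addrC.
Qed.

End Basics.

Section Pair.
Variables (F : fieldType) (p q : nat).
Local Notation n := (p + q)%N.
Local Notation Mat := 'M[F]_n.
Local Notation Vec := 'cV[F]_n.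
Local Notation P := (proj F p q).
Local Notation s := (ssign F).

Lemma ssignC a b : s a b = s b a.
Proof. by rewrite /ssign andbC. Qed.

Lemma ssign_sq a b : s a b * s a b = 1.
Proof. by rewrite /ssign; case: (a && b); rewrite ?mulr1 ?mulrNN ?mulr1. Qed.

Lemma ssignK a b (v : Vec) : s a b *: (s a b *: v) = v.
Proof. by rewrite scalerA ssign_sq scale1r. Qed.

Lemma sum_vpart (y : Vec) : \sum_b vpart b y = y.
Proof. by rewrite big_bool /= addrC vpart_sum. Qed.

Lemma sum_mpart (A : Mat) : \sum_b mpart b A = A.
Proof. by rewrite big_bool /= addrC mpart_sum. Qed.

Lemma sum_mv (A : Mat) (y : Vec) : \sum_a \sum_b mpart a A *m vpart b y = A *m y.
Proof.
under eq_bigr do rewrite -mulmx_sumr sum_vpart.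
by rewrite -mulmx_suml sum_mpart.
Qed.

Definition sact (B : Mat) (x : Vec) : Vec :=
  \sum_a \sum_b s a b *: (mpart b B *m vpart a x).

Lemma opairingE (e f : Elt F p q) : opairing e f = 2^-1 *: (e.1 *m f.2 + sact f.1 e.2).
Proof.
rewrite /opairing /sact -sum_mv scalerDr !scaler_sumr -big_split /=.
apply: eq_bigr => a _; rewrite !scaler_sumr -big_split /=.
by apply: eq_bigr => b _; rewrite scalerDr.
Qed.

Lemma obracket2E (e f : Elt F p q) : (obracket e f).2 = 2^-1 *: (e.1 *m f.2 - sact f.1 e.2).
Proof.
rewrite /obracket /sact -sum_mv scalerBr !scaler_sumr -sumrB /=.
apply: eq_bigr => a _; rewrite !scaler_sumr -sumrB /=.
by apply: eq_bigr => b _; rewrite scalerBr.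
Qed.

Lemma sact0 (B : Mat) : sact B 0 = 0.
Proof. by rewrite /sact big1 // => a _; rewrite big1 // => b _; rewrite vpart0 mulmx0 scaler0. Qed.

Lemma sact_hom a0 b0 (B : Mat) (x : Vec) :
  mpart b0 B = B -> vpart a0 x = x -> sact B x = s a0 b0 *: (B *m x).
Proof.
move=> HB Hx; rewrite /sact -HB -Hx !big_bool /= !mpart_mpart !vpart_vpart.
by clear HB Hx; case: a0; case: b0 => /=; rewrite ?mul0mx ?mulmx0 ?scaler0 ?addr0 ?add0r.
Qed.

Lemma scomm_hom a b (A B : Mat) :
  mpart a A = A -> mpart b B = B -> scomm A B = A *m B - s a b *: (B *m A).
Proof.
move=> HA HB; rewrite /scomm -HA -HB !big_bool /= !mpart_mpart.
by clear HA HB; case: a; case: b => /=; rewrite ?mul0mx ?mulmx0 ?scaler0 ?subr0 ?addr0 ?add0r.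
Qed.

End Pair.

Section Char.
Variable F : fieldType.
Hypothesis chF : [pchar F] =i pred0.

Lemma two_neq0 : (2%:R : F) != 0.
Proof. by move/pcharf0P: chF => ->. Qed.

Lemma my_half_double m k (v : 'M[F]_(m, k)) : 2^-1 *: (v + v) = v.
Proof.
have -> : v + v = 2%:R *: v by rewrite scaler_nat mulr2n.
by rewrite scalerA mulVf ?two_neq0 // scale1r.
Qed.

Lemma my_half_eq0 m k (v : 'M[F]_(m, k)) : 2^-1 *: v = 0 -> v = 0.
Proof.
move/eqP; rewrite scaler_eq0 invr_eq0 (negbTE two_neq0) /= => /eqP //.
Qed.
End Char.

Unset Implicit Arguments.
Section LinAlg.
Variables (F : fieldType) (n : nat).
Local Notation Vec := 'cV[F]_n.
Variable W : Vec -> Prop.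
Hypothesis W0 : W 0.
Hypothesis WD : forall (c : F) (x y : Vec), W x -> W y -> W (c *: x + y).

Lemma lWZ c x : W x -> W (c *: x).
Proof. by move=> Hx; have := WD c _ _ Hx W0; rewrite addr0. Qed.

Lemma lWA x y : W x -> W y -> W (x + y).
Proof. by move=> Hx Hy; have := WD 1 _ _ Hx Hy; rewrite scale1r. Qed.

Definition Qsp (S : 'M[F]_n) := forall u : 'rV_n, (u <= S)%MS -> W u^T.

Lemma Q0 : Qsp 0.
Proof. by move=> u; rewrite submx0 => /eqP ->; rewrite trmx0. Qed.

Lemma Qadd S w : Qsp S -> W w -> Qsp (S + w^T)%MS.
Proof.
move=> QS Ww u /sub_addsmxP [[u1 u2] /= ->].
rewrite [u2]mx11_scalar mul_scalar_mx linearD linearZ /= trmxK.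
rewrite addrC; apply: WD => //; apply: QS; exact: submxMl.
Qed.

Lemma W_rowspace : exists S : 'M[F]_n, forall w : Vec, W w <-> (w^T <= S)%MS.
Proof.
have step : forall k, exists S : 'M[F]_n, Qsp S /\
   ((k <= \rank S)%N \/ forall w, W w -> (w^T <= S)%MS).
  elim=> [|k [S [QS [Hk|Hall]]]].
  - by exists 0; split; [exact: Q0 | left].
  - case: (classic (exists w, W w /\ ~ (w^T <= S)%MS)) => [[w [Ww Nw]]|Hn].
    + exists (S + w^T)%MS; split; first exact: Qadd.
      left; apply: leq_ltn_trans Hk _; apply: rank_ltmx; rewrite ltmxE addsmxSl /=.
      apply/negP => H; apply: Nw; exact: submx_trans (addsmxSr S w^T) H.
    + exists S; split => //; right => w Ww.
      by apply: NNPP => Nw; apply: Hn; exists w.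
  - by exists S; split => //; right.
have [S [QS [Hk|Hall]]] := step n.+1.
  by have := rank_leq_col S; rewrite leqNgt Hk.
exists S => w; split; first exact: Hall.
by move=> /QS; rewrite trmxK.
Qed.

Lemma W_sep x : ~ W x -> exists B : 'M[F]_n,
  (forall w, W w -> B *m w = 0) /\ B *m x != 0.
Proof.
have [S HS] := W_rowspace.
move=> Nx; exists (cokermx S)^T; split.
  move=> w /HS; rewrite submxE => /eqP H.
  by rewrite -[w]trmxK -trmx_mul H trmx0.
rewrite -[x]trmxK -trmx_mul trmx_eq0 -submxE.
by apply/negP => /HS.
Qed.

Lemma W_ext (g : Vec -> Vec) :
  (forall c x y, W x -> W y -> g (c *: x + y) = c *: g x + g y) ->
  exists C : 'M[F]_n, forall z, W z -> C *m z = g z.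
Proof.
move=> gL.
have g0 : g 0 = 0.
  have := gL 1 0 0 W0 W0; rewrite !scale1r addr0 => H.
  by apply: (addrI (g 0)); rewrite addr0 -H.
have [S HS] := W_rowspace.
pose G : 'M[F]_n := \matrix_(i, j) (g (row i S)^T)^T 0 j.
exists (pinvmx S *m G)^T => z Wz.
have zS := proj1 (HS z) Wz.
set u := z^T *m pinvmx S.
have zE : z = (\sum_i u 0 i *: row i S)^T.
  by rewrite -mulmx_sum_row /u mulmxKpV // trmxK.
rewrite -[z in LHS]trmxK -trmx_mul mulmxA -/u mulmx_sum_row.
have rowG : forall i, row i G = (g (row i S)^T)^T.
  by move=> i; apply/rowP => j; rewrite !mxE.
under eq_bigr do rewrite rowG.
rewrite zE linear_sum /=.
have WS : forall i, W (row i S)^T by move=> i; apply/HS; rewrite trmxK row_sub.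
have -> : (\sum_i u 0 i *: row i S)^T = \sum_i u 0 i *: (row i S)^T.
  by rewrite linear_sum; apply: eq_bigr => i _; rewrite linearZ.
under eq_bigr do rewrite linearZ /= trmxK.
pose K (a b : Vec) := W a /\ g a = b.
suff [_ ->] : K (\sum_i u 0 i *: (row i S)^T) (\sum_i u 0 i *: g (row i S)^T).
  by [].
apply: (big_ind2 K).
- by split.
- move=> a1 b1 a2 b2 [Wa1 ga1] [Wa2 ga2]; split; first exact: lWA.
  by have := gL 1 a1 a2 Wa1 Wa2; rewrite !scale1r => ->; rewrite ga1 ga2.
- move=> i _; split; first exact: lWZ.
  by rewrite -[_ *: _]addr0 gL // g0 addr0.
Qed.
End LinAlg.

Set Implicit Arguments.
Section Part1.
Variables (F : fieldType) (p q : nat).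
Hypothesis chF : [pchar F] =i pred0.
Local Notation n := (p + q)%N.
Local Notation Mat := 'M[F]_n.
Local Notation Vec := 'cV[F]_n.
Local Notation s := (ssign F).
Variable L : Elt F p q -> Prop.
Hypothesis HL : dirac L.

Lemma L00 : L (0, 0).
Proof. by case: HL => [[[H _] _] _]. Qed.
Lemma Lsub c e f : L e -> L f -> L (c *: e.1 + f.1, c *: e.2 + f.2).
Proof. by case: HL => [[[_ H] _] _]; apply: H. Qed.
Lemma Lep b e : L e -> L (epart b e).
Proof. by case: HL => [[_ H] _]; apply: H. Qed.
Lemma Lpair e f : L e -> L f -> opairing e f = 0.
Proof. by case: HL => [_ [H _]] He; move: f; apply/H. Qed.
Lemma Lbr e f : L e -> L f -> L (obracket e f).
Proof. by case: HL => [_ [_ H]]; apply: H. Qed.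

Lemma Lkill C (y : Vec) : L (C, 0) -> WL L y -> C *m y = 0.
Proof.
move=> HC [B HB]; have := Lpair HC HB.
by rewrite opairingE /= sact0 addr0 => /(my_half_eq0 chF).
Qed.

Lemma Ldiff A A' x : L (A, x) -> L (A', x) -> L (A - A', 0).
Proof.
move=> H H'.
suff -> : (A - A', 0) = (-1 *: (A', x).1 + (A, x).1, -1 *: (A', x).2 + (A, x).2).
  exact: Lsub.
by rewrite /= !scaleN1r addNr addrC.
Qed.

Lemma Lwd (x y : Vec) A A' : WL L y -> L (A, x) -> L (A', x) -> A *m y = A' *m y.
Proof.
move=> Hy H H'; apply/eqP; rewrite -subr_eq0 -mulmxBl; apply/eqP.
exact: Lkill (Ldiff H H') Hy.
Qed.

Lemma Lbr2 A B x y : L (A, x) -> L (B, y) -> L (scomm A B, A *m y).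
Proof.
move=> HA HB.
have P0 := Lpair HA HB; rewrite opairingE /= in P0.
have /eqP := my_half_eq0 chF P0; rewrite addrC addr_eq0 => /eqP E.
have := Lbr HA HB.
have -> : obracket (A, x) (B, y) = (scomm A B, (obracket (A, x) (B, y)).2) by [].
by rewrite obracket2E /= E opprK (my_half_double chF).
Qed.

Definition brL (x y : Vec) : Vec := epsilon (inhabits 0) (fun A => L (A, x)) *m y.

Lemma brLE x y A : L (A, x) -> WL L y -> brL x y = A *m y.
Proof.
move=> HA Hy; rewrite /brL; apply: (Lwd Hy _ HA).
by apply: (epsilon_spec (inhabits 0) (fun A => L (A, x))); exists A.
Qed.

Lemma WL_graded : gradedV (WL L).
Proof.
split; first by exists 0; exact: L00.
split.
  move=> c x y [A HA] [B HB]; exists (c *: A + B).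
  exact: (Lsub c HA HB).
by move=> b x [A HA]; exists (mpart b A); exact: (Lep b HA).
Qed.

Lemma WL_lie : lie_super (WL L) brL.
Proof.
have [_ [WLD _]] := WL_graded.
split.
  move=> x y [A HA] Wy; rewrite (brLE HA Wy).
  case: Wy => B HB; exists (scomm A B); exact: Lbr2 HA HB.
split.
  move=> c x y z Wx Wy [C HC]; case: (Wx) => A HA; case: (Wy) => B HB.
  rewrite (brLE (Lsub c HA HB)) /=; last by exists C.
  rewrite (brLE HA) ?(brLE HB); try by exists C.
  rewrite (brLE HC (WLD c x y Wx Wy)) (brLE HC Wx) (brLE HC Wy).
  by rewrite mulmxDl mulmxDr -scalemxAl -scalemxAr.
split.
  move=> a b x y [A HA] Wy hx hy.
  have HA' := Lep a HA; rewrite /epart /= hx in HA'.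
  rewrite (brLE HA' Wy) /homog -hy mpart_vpart vpart_vpart eqxx //.
split.
  move=> a b x y [A HA] [B HB] hx hy.
  have HA' := Lep a HA; rewrite /epart /= hx in HA'.
  have HB' := Lep b HB; rewrite /epart /= hy in HB'.
  rewrite (brLE HA'); last by exists B.
  rewrite (brLE HB'); last by exists A.
  have := Lpair HA' HB'; rewrite opairingE /= (@sact_hom _ _ _ a b); last by [].
    by move/(my_half_eq0 chF)/eqP; rewrite addr_eq0 => /eqP.
  by rewrite mpart_mpart eqxx.
move=> a b c x y z [A HA] [B HB] [C HC] hx hy hz.
have HA' := Lep a HA; rewrite /epart /= hx in HA'.
have HB' := Lep b HB; rewrite /epart /= hy in HB'.
have Wz : WL L z by exists C.
have HAB := Lbr2 HA' HB'.
rewrite [brL x y](brLE HA'); last by exists B.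
rewrite (brLE HAB Wz) (brLE HB' Wz) (brLE HA' Wz).
rewrite (brLE HA'); last by exists (scomm (mpart b B) C); exact: Lbr2 HB' HC.
rewrite (brLE HB'); last by exists (scomm (mpart a A) C); exact: Lbr2 HA' HC.
rewrite (@scomm_hom _ _ _ a b) ?mpart_mpart ?eqxx //.
by rewrite mulmxBl -scalemxAl -!mulmxA subrK.
Qed.

End Part1.

Section Part2.
Variables (F : fieldType) (p q : nat).
Local Notation Vec := 'cV[F]_(p + q).

Lemma incl (L L' : Elt F p q -> Prop) : dirac L' ->
  (forall x, WL L x -> WL L' x) -> (forall x, WL L' x -> WL L x) ->
  (forall (x y : Vec) A A', WL L y -> L (A, x) -> L' (A', x) -> A *m y = A' *m y) ->
  forall e, L e -> L' e.
Proof.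
move=> HL' i1 i2 agree [A x] He.
have [A' HA'] := i1 x (ex_intro _ A He).
have K : L' (A - A', 0).
  apply/(proj1 (proj2 HL')) => [[B y]] Hf.
  rewrite opairingE /= sact0 addr0.
  have -> : (A - A') *m y = 0.
    apply/eqP; rewrite mulmxBl subr_eq0; apply/eqP.
    apply: agree He HA'; apply: i2; by exists B.
  by rewrite scaler0.
suff -> : (A, x) = (1 *: (A - A', 0 : Vec).1 + (A', x).1, 1 *: (A - A', 0 : Vec).2 + (A', x).2).
  by apply: (Lsub HL').
by rewrite /= !scale1r add0r subrK.
Qed.
End Part2.

Section PMP.
Variables (F : fieldType) (p q : nat).
Local Notation n := (p + q)%N.
Local Notation s := (ssign F).

Lemma sact_PMP a c (M : 'M[F]_n) (x : 'cV[F]_n) :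
  sact (proj F p q c *m M *m proj F p q a) x =
  s a (a (+) c) *: vpart c (M *m vpart a x).
Proof.
rewrite /sact !big_bool /= /mpart /vpart.
move: (@PPr F p q) (@PP F p q).
move: (proj F p q) => P' PPr' PP'.
rewrite -!mulmxA.
case: a; case: c; rewrite ?(mulmxDl, mulmxDr) -?mulmxA ?PPr' /= ?mulmx0 ?scaler0 ?addr0 ?add0r.
all: by rewrite !scaler0 ?addr0 ?add0r.
Qed.
End PMP.

Section Part3.
Variables (F : fieldType) (p q : nat).
Hypothesis chF : [pchar F] =i pred0.
Local Notation n := (p + q)%N.
Local Notation Mat := 'M[F]_n.
Local Notation Vec := 'cV[F]_n.
Local Notation s := (ssign F).
Variable W : Vec -> Prop.
Variable br : Vec -> Vec -> Vec.
Hypothesis GW : gradedV W.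
Hypothesis LW : lie_super W br.

Lemma W0 : W 0. Proof. by case: GW. Qed.
Lemma WD c x y : W x -> W y -> W (c *: x + y). Proof. by case: GW => _ [H _]; apply: H. Qed.
Lemma Wv b x : W x -> W (vpart b x). Proof. by case: GW => _ [_ H]; apply: H. Qed.
Lemma WA x y : W x -> W y -> W (x + y).
Proof. by move=> Hx Hy; have := WD 1 Hx Hy; rewrite scale1r. Qed.
Lemma brW x y : W x -> W y -> W (br x y). Proof. by case: LW => H _; apply: H. Qed.
Lemma brL1 c x y z : W x -> W y -> W z -> br (c *: x + y) z = c *: br x z + br y z.
Proof. by case: LW => _ [H _] Hx Hy Hz; case: (H c x y z Hx Hy Hz). Qed.
Lemma brL2 c x y z : W x -> W y -> W z -> br z (c *: x + y) = c *: br z x + br z y.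
Proof. by case: LW => _ [H _] Hx Hy Hz; case: (H c x y z Hx Hy Hz). Qed.
Lemma brpar a b x y : W x -> W y -> homog a x -> homog b y -> homog (a (+) b) (br x y).
Proof. by case: LW => _ [_ [H _]]; apply: H. Qed.
Lemma branti a b x y : W x -> W y -> homog a x -> homog b y -> br x y = - (s a b *: br y x).
Proof. by case: LW => _ [_ [_ [H _]]]; apply: H. Qed.
Lemma brjac a b c x y z : W x -> W y -> W z -> homog a x -> homog b y -> homog c z ->
     br x (br y z) = br (br x y) z + s a b *: br y (br x z).
Proof. by case: LW => _ [_ [_ [_ H]]]; apply: H. Qed.

Lemma brA1 x y z : W x -> W y -> W z -> br (x + y) z = br x z + br y z.
Proof. by move=> Hx Hy Hz; have := brL1 1 Hx Hy Hz; rewrite !scale1r. Qed.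
Lemma brA2 x y z : W x -> W y -> W z -> br z (x + y) = br z x + br z y.
Proof. by move=> Hx Hy Hz; have := brL2 1 Hx Hy Hz; rewrite !scale1r. Qed.
Lemma br0l z : W z -> br 0 z = 0.
Proof.
move=> Hz; have := brA1 W0 W0 Hz; rewrite addr0 => H.
by apply: (addrI (br 0 z)); rewrite addr0 -H.
Qed.

Lemma homv a (x : Vec) : homog a (vpart a x).
Proof. by rewrite /homog vpart_vpart eqxx. Qed.

Lemma split1 x z : W x -> W z -> br x z = \sum_a br (vpart a x) z.
Proof.
move=> Hx Hz; rewrite big_bool /= -brA1; try exact: Wv; try exact: Hz.
by rewrite addrC vpart_sum.
Qed.
Lemma split2 x z : W x -> W z -> br x z = \sum_a br x (vpart a z).
Proof.
move=> Hx Hz; rewrite big_bool /= -brA2; try exact: Wv; try exact: Hx.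
by rewrite addrC vpart_sum.
Qed.

Lemma brsum x y : W x -> W y -> \sum_a \sum_b br (vpart a x) (vpart b y) = br x y.
Proof.
move=> Hx Hy; rewrite (split1 Hx Hy); apply: eq_bigr => a _.
by rewrite -split2 //; exact: Wv.
Qed.

Lemma vpart_homog d e (v : Vec) : homog d v -> vpart e v = if d == e then v else 0.
Proof. by rewrite /homog => <-; rewrite vpart_vpart eq_sym; case: (d == e). Qed.

Lemma vpartA b (x y : Vec) : vpart b (x + y) = vpart b x + vpart b y.
Proof. by rewrite /vpart mulmxDr. Qed.

Local Notation D := (diracOf W br).

Lemma compD A x y a c : D (A, x) -> W y ->
  mpart a A *m vpart c y = br (vpart a x) (vpart c y).
Proof.
case=> /= Wx HA Wy.
rewrite mpart_vpart (HA _ (Wv c Wy)) (split1 Wx (Wv c Wy)) big_bool /= vpartA.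
rewrite (vpart_homog _ (brpar (Wv true Wx) (Wv c Wy) (homv _ _) (homv _ _))).
rewrite (vpart_homog _ (brpar (Wv false Wx) (Wv c Wy) (homv _ _) (homv _ _))).
by case: a; case: c => /=; rewrite ?addr0 ?add0r.
Qed.

Lemma compD2 A x y a : D (A, x) -> W y -> mpart a A *m y = br (vpart a x) y.
Proof.
move=> HD Wy; rewrite -{1}(sum_vpart y) mulmx_sumr.
under eq_bigr do rewrite (compD _ _ HD Wy).
by rewrite -split2 //; apply: Wv; case: HD.
Qed.

Lemma D_sub : subspaceE D.
Proof.
split.
  split; first exact: W0.
  by move=> y Wy; rewrite /= mul0mx br0l.
move=> c [A x] [B y] [/= Wx HA] [/= Wy HB]; split => /=; first exact: WD.
by move=> z Wz; rewrite mulmxDl -scalemxAl HA // HB // brL1.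
Qed.

Lemma D_ep b e : D e -> D (epart b e).
Proof.
case: e => A x HD; split => /=; first by apply: Wv; case: HD.
by move=> y Wy; rewrite (compD2 _ HD Wy).
Qed.

Lemma D_pair e f : D e -> D f -> opairing e f = 0.
Proof.
case: e => A x; case: f => B y He Hf.
have Wx : W x by case: He.
have Wy : W y by case: Hf.
rewrite /opairing big1 // => a _; rewrite big1 // => b _ /=.
rewrite (compD _ _ He Wy) (compD _ _ Hf Wx).
rewrite (branti (Wv _ Wx) (Wv _ Wy) (homv _ _) (homv _ _)).
by rewrite addNr scaler0.
Qed.

Lemma D_ext y : W y -> exists C, D (C, y).
Proof.
move=> Wy.
have [C HC] := @W_ext F n W W0 WD (br y) (fun c x z Hx Hz => brL2 c Hx Hz Wy).
by exists C; split.
Qed.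

Lemma D_WL x : WL D x <-> W x.
Proof.
split; first by case=> A [].
exact: D_ext.
Qed.

Lemma D_perp A x : (forall f, D f -> opairing (A, x) f = 0) -> D (A, x).
Proof.
move=> Hperp.
have Wx : W x.
  apply: NNPP => Nx.
  have [a Na] : exists a, ~ W (vpart a x).
    apply: NNPP => H; apply: Nx; rewrite -(vpart_sum x); apply: WA;
      apply: NNPP => N; apply: H; by eexists; exact: N.
  have [B0 [HB0 NB0]] := @W_sep F n W W0 WD _ Na.
  have [c Nc] : exists c, vpart c (B0 *m vpart a x) != 0.
    apply: NNPP => H; move/negP: NB0; apply.
    rewrite -(vpart_sum (B0 *m vpart a x)).
    have H0 : forall c, vpart c (B0 *m vpart a x) = 0.
      by move=> c'; apply: NNPP => N; apply: H; exists c'; apply/eqP.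
    by rewrite !H0 addr0.
  pose B := proj F p q c *m B0 *m proj F p q a.
  have HB : D (B, 0).
    split; first exact: W0.
    move=> y Wy; rewrite /= br0l // /B -mulmxA -mulmxA.
    by rewrite -/(vpart a y) HB0 ?mulmx0 //; apply: Wv.
  have := Hperp _ HB; rewrite opairingE /= mulmx0 add0r sact_PMP.
  move/(my_half_eq0 chF) => H; move/negP: Nc; apply; apply/eqP.
  by rewrite -[LHS](ssignK (a) (a (+) c)) H scaler0.
split => //= y Wy.
have [C HC] := D_ext Wy.
have := Hperp _ HC.
have -> : opairing (A, x) (C, y) = 2^-1 *: (A *m y - br x y).
  rewrite /opairing -sum_mv -(brsum Wx Wy) -sumrB scaler_sumr.
  apply: eq_bigr => a _; rewrite -sumrB scaler_sumr; apply: eq_bigr => b _ /=.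
  rewrite (compD _ _ HC Wx) (branti (Wv _ Wy) (Wv _ Wx) (homv _ _) (homv _ _)).
  by rewrite scalerN ssignC ssignK.
by move/(my_half_eq0 chF)/eqP; rewrite subr_eq0 => /eqP.
Qed.

Lemma sumbr1 (u : bool -> Vec) z : (forall b, W (u b)) -> W z ->
  \sum_b br (u b) z = br (\sum_b u b) z.
Proof. by move=> Hu Hz; rewrite !big_bool /= brA1. Qed.

Lemma jac_gen a b x y z : W x -> W y -> W z -> homog a x -> homog b y ->
  br x (br y z) - s a b *: br y (br x z) = br (br x y) z.
Proof.
move=> Wx Wy Wz hx hy.
have Wz0 := Wv false Wz; have Wz1 := Wv true Wz.
have W1 := brW Wy Wz0; have W2 := brW Wy Wz1; have W3 := brW Wx Wz0; have W4 := brW Wx Wz1.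
have W5 := brW Wx Wy.
rewrite -(vpart_sum z) !brA2 //.
rewrite (brjac Wx Wy Wz0 hx hy (homv _ _)) (brjac Wx Wy Wz1 hx hy (homv _ _)).
by rewrite scalerDr addrACA addrK.
Qed.

Lemma D_br e f : D e -> D f -> D (obracket e f).
Proof.
case: e => A x; case: f => B y He Hf.
have Wx : W x by case: He.
have Wy : W y by case: Hf.
have P0 := D_pair He Hf; rewrite opairingE /= in P0.
have /eqP := my_half_eq0 chF P0; rewrite addrC addr_eq0 => /eqP E.
have -> : obracket (A, x) (B, y) = (scomm A B, (obracket (A, x) (B, y)).2) by [].
rewrite obracket2E /= E opprK (my_half_double chF).
have HA := He; case: He => _ HA'; rewrite HA' //.
split => /=; first exact: brW.
move=> z Wz.
rewrite /scomm mulmx_suml.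
transitivity (\sum_a \sum_b br (br (vpart a x) (vpart b y)) z).
  apply: eq_bigr => a _; rewrite mulmx_suml; apply: eq_bigr => b _.
  rewrite mulmxBl -scalemxAl -!mulmxA (compD2 _ Hf Wz) (compD2 _ HA Wz).
  rewrite (compD2 _ HA (brW (Wv _ Wy) Wz)) (compD2 _ Hf (brW (Wv _ Wx) Wz)).
  by rewrite jac_gen //; (apply: Wv || apply: homv).
rewrite (eq_bigr (fun a => br (br (vpart a x) y) z)); last first.
  move=> a _; rewrite sumbr1 //; last by move=> b; apply: brW; apply: Wv.
  by rewrite -split2 //; apply: Wv.
rewrite sumbr1 //; last by move=> a; apply: brW => //; apply: Wv.
by rewrite -split1.
Qed.
End Part3.


Theorem mainTheorem6 (F : fieldType) (p q : nat) :
  [pchar F] =i pred0 ->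
  (* (1) for a Dirac structure L: W_L graded subspace, [.,.]_L well defined,
     W_L-valued, and a Lie superalgebra *)
  (forall L : Elt F p q -> Prop, @dirac F p q L ->
     @gradedV F p q (@WL F p q L) /\
     (forall (x y : 'cV[F]_(p + q)) (A A' : 'M[F]_(p + q)),
        @WL F p q L y -> L (A, x) -> L (A', x) -> A *m y = A' *m y) /\
     exists br : 'cV[F]_(p + q) -> 'cV[F]_(p + q) -> 'cV[F]_(p + q),
       (forall x y A, L (A, x) -> @WL F p q L y -> br x y = A *m y) /\
       @lie_super F p q (@WL F p q L) br) /\
  (* (2) injectivity of L |-> (W_L, [.,.]_L) *)
  (forall L L' : Elt F p q -> Prop, @dirac F p q L -> @dirac F p q L' ->
     (forall x, @WL F p q L x <-> @WL F p q L' x) ->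
     (forall x y A A', @WL F p q L y -> L (A, x) -> L' (A', x) -> A *m y = A' *m y) ->
     forall e, L e <-> L' e) /\
  (* (3) surjectivity, with the explicit inverse *)
  (forall (W : 'cV[F]_(p + q) -> Prop) (br : 'cV[F]_(p + q) -> 'cV[F]_(p + q) -> 'cV[F]_(p + q)),
     @gradedV F p q W -> @lie_super F p q W br ->
     @dirac F p q (@diracOf F p q W br) /\
     (forall x, @WL F p q (@diracOf F p q W br) x <-> W x) /\
     (forall x y A, @diracOf F p q W br (A, x) -> W y -> A *m y = br x y)).

Proof.
move=> chF; split.
  move=> L HL; split; first exact: WL_graded.
  split; first by move=> x y A A' Hy H H'; exact: (Lwd chF HL Hy H H').
  exists (brL L); split; first by move=> x y A H Hy; exact: (brLE chF HL H Hy).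
  exact: WL_lie.
split.
  move=> L L' HL HL' Hw Hag e; split.
    move=> He; apply: (@incl F p q L L' HL' _ _ _ e He).
    - by move=> x; exact: (proj1 (Hw x)).
    - by move=> x; exact: (proj2 (Hw x)).
    - exact: Hag.
  move=> He; apply: (@incl F p q L' L HL _ _ _ e He).
  - by move=> x; exact: (proj2 (Hw x)).
  - by move=> x; exact: (proj1 (Hw x)).
  - by move=> x y A A' Hy H H'; symmetry; apply: Hag H' H; exact: (proj2 (Hw y)).
move=> W br GW LW; split.
  split; first by split; [exact: (D_sub GW LW) | move=> b e; exact: (D_ep GW LW)].
  split; last by move=> e f; exact: (D_br chF GW LW).
  move=> [A x]; split; first by move=> He f Hf; exact: (D_pair GW LW He Hf).
  exact: (D_perp chF GW LW).
split; first exact: (D_WL GW LW).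
by move=> x y A [_ H] Wy; apply: H.
Qed.
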